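(* Let $M$ be a graded $R$-module. The set $\beta=\{GX_r^{qp.M}\mid r\in h(R)\}$ forms a base for the quasi-Zariski topology on $qp.Spec_g(M)$.
   Context: $R=\bigoplus_{g\in G}R_g$ is a graded commutative ring with identity graded by a group $G$, $h(R)=\bigcup_g R_g$; $M$ is a graded $R$-module, $h(M)$ its homogeneous elements. $Gr(I)$ is the graded radical of a graded ideal $I$. $(K:_RM)=\{r: rM\subseteq K\}$. Graded prime submodule: proper graded $P$ with $rm\in P$ ($r\in h(R), m\in h(M)$) implying $m\in P$ or $r\in(P:_RM)$. $Gr_M(K)$: intersection of graded prime submodules containing $K$ ($M$ if none). Graded primeful property of $K$: for each graded prime $p\supseteq(K:_RM)$ there is a graded prime submodule $P\supseteq K$ with $(P:_RM)=p$. Graded quasi-primary submodule: proper graded $Q$ with $rm\in Q$ ($r\in h(R),m\in h(M)$) implying $r\in Gr((Q:_RM))$ or $m\in Gr_M(Q)$. $qp.Spec_g(M)$: graded quasi-primary submodules with the graded primeful property. $qp\text{-}V_M^g(K)=\{Q\in qp.Spec_g(M): Gr((Q:_RM))\supseteq Gr((K:_RM))\}$; the quasi-Zariski topology has closed sets exactly these. For $r\in h(R)$, $GX_r^{qp.M}=qp.Spec_g(M)\setminus qp\text{-}V_M^g(rM)$. *)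

(* Defs.v *)
From mathcomp Require Import all_boot all_order all_algebra.
Set Implicit Arguments. Unset Strict Implicit. Unset Printing Implicit Defensive.
Import GRing.Theory.
Local Open Scope ring_scope.

Definition is_group (G : Type) (mul : G -> G -> G) (e : G) (inv : G -> G) : Prop :=
  (forall a b c, mul a (mul b c) = mul (mul a b) c) /\
  (forall a, mul e a = a /\ mul a e = a) /\
  (forall a, mul (inv a) a = e /\ mul a (inv a) = e).

Definition additive_subgroup (V : zmodType) (S : V -> Prop) : Prop :=
  S 0 /\ forall x y, S x -> S y -> S (x - y).

(** V = (+)_{g in G} S g as an internal direct sum of additive subgroups. *)
Definition dsum_decomp (G : Type) (V : zmodType) (S : G -> V -> Prop) : Prop :=
  (forall g, additive_subgroup (S g)) /\
  (forall x : V, exists n (gs : 'I_n -> G) (f : 'I_n -> V),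
      (forall i j, gs i = gs j -> i = j) /\
      (forall i, S (gs i) (f i)) /\ x = \sum_(i < n) f i) /\
  (forall n (gs : 'I_n -> G) (f : 'I_n -> V),
      (forall i j, gs i = gs j -> i = j) ->
      (forall i, S (gs i) (f i)) -> \sum_(i < n) f i = 0 -> forall i, f i = 0).

Definition graded_ring (G : Type) (mul : G -> G -> G) (R : comPzRingType)
  (RG : G -> R -> Prop) : Prop :=
  dsum_decomp RG /\
  forall g h a b, RG g a -> RG h b -> RG (mul g h) (a * b).

Definition graded_module (G : Type) (mul : G -> G -> G) (R : comPzRingType)
  (RG : G -> R -> Prop) (M : lmodType R) (MG : G -> M -> Prop) : Prop :=
  dsum_decomp MG /\
  forall g h r m, RG g r -> MG h m -> MG (mul g h) (r *: m).

Definition homog (G T : Type) (S : G -> T -> Prop) (x : T) : Prop := exists g, S g x.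

Definition ideal (R : comPzRingType) (I : R -> Prop) : Prop :=
  I 0 /\ (forall x y, I x -> I y -> I (x + y)) /\ (forall r x, I x -> I (r * x)).

Definition submodule (R : comPzRingType) (M : lmodType R) (N : M -> Prop) : Prop :=
  N 0 /\ (forall x y, N x -> N y -> N (x + y)) /\ (forall r x, N x -> N (r *: x)).

Definition graded_ideal (G : Type) (R : comPzRingType) (RG : G -> R -> Prop)
  (I : R -> Prop) : Prop :=
  ideal I /\
  forall x, I x -> exists n (gs : 'I_n -> G) (f : 'I_n -> R),
    (forall i j, gs i = gs j -> i = j) /\
    (forall i, RG (gs i) (f i) /\ I (f i)) /\ x = \sum_(i < n) f i.

Definition graded_submodule (G : Type) (R : comPzRingType) (M : lmodType R)
  (MG : G -> M -> Prop) (N : M -> Prop) : Prop :=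
  submodule N /\
  forall x, N x -> exists n (gs : 'I_n -> G) (f : 'I_n -> M),
    (forall i j, gs i = gs j -> i = j) /\
    (forall i, MG (gs i) (f i) /\ N (f i)) /\ x = \sum_(i < n) f i.

Definition graded_prime_ideal (G : Type) (R : comPzRingType) (RG : G -> R -> Prop)
  (p : R -> Prop) : Prop :=
  graded_ideal RG p /\ (exists r, ~ p r) /\
  forall a b, homog RG a -> homog RG b -> p (a * b) -> p a \/ p b.

Definition Gr (G : Type) (R : comPzRingType) (RG : G -> R -> Prop)
  (I : R -> Prop) : R -> Prop :=
  fun x => exists n (gs : 'I_n -> G) (f : 'I_n -> R),
    (forall i j, gs i = gs j -> i = j) /\
    (forall i, RG (gs i) (f i)) /\ x = \sum_(i < n) f i /\
    (forall i, exists k, I (f i ^+ k.+1)).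

Definition colon (R : comPzRingType) (M : lmodType R) (K : M -> Prop) : R -> Prop :=
  fun r => forall m : M, K (r *: m).

Definition graded_prime_submodule (G : Type) (R : comPzRingType) (RG : G -> R -> Prop)
  (M : lmodType R) (MG : G -> M -> Prop) (P : M -> Prop) : Prop :=
  graded_submodule MG P /\ (exists m, ~ P m) /\
  forall r m, homog RG r -> homog MG m -> P (r *: m) -> P m \/ colon P r.

(** Gr_M(K): intersection of graded prime submodules containing K (M if none) *)
Definition GrM (G : Type) (R : comPzRingType) (RG : G -> R -> Prop)
  (M : lmodType R) (MG : G -> M -> Prop) (K : M -> Prop) : M -> Prop :=
  fun m => forall P, graded_prime_submodule RG MG P -> (forall x, K x -> P x) -> P m.

Definition graded_primeful (G : Type) (R : comPzRingType) (RG : G -> R -> Prop)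
  (M : lmodType R) (MG : G -> M -> Prop) (K : M -> Prop) : Prop :=
  forall p, graded_prime_ideal RG p -> (forall r, colon K r -> p r) ->
    exists P, graded_prime_submodule RG MG P /\ (forall x, K x -> P x) /\
              (forall r, colon P r <-> p r).

Definition graded_quasi_primary (G : Type) (R : comPzRingType) (RG : G -> R -> Prop)
  (M : lmodType R) (MG : G -> M -> Prop) (Q : M -> Prop) : Prop :=
  graded_submodule MG Q /\ (exists m, ~ Q m) /\
  forall r m, homog RG r -> homog MG m -> Q (r *: m) ->
    Gr RG (colon Q) r \/ GrM RG MG Q m.

Definition qpSpec (G : Type) (R : comPzRingType) (RG : G -> R -> Prop)
  (M : lmodType R) (MG : G -> M -> Prop) (Q : M -> Prop) : Prop :=
  graded_quasi_primary RG MG Q /\ graded_primeful RG MG Q.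

Definition qpV (G : Type) (R : comPzRingType) (RG : G -> R -> Prop)
  (M : lmodType R) (MG : G -> M -> Prop) (K : M -> Prop) (Q : M -> Prop) : Prop :=
  qpSpec RG MG Q /\ (forall r, Gr RG (colon K) r -> Gr RG (colon Q) r).

Definition smul_sub (R : comPzRingType) (M : lmodType R) (r : R) : M -> Prop :=
  fun x => exists m, x = r *: m.

Definition GX (G : Type) (R : comPzRingType) (RG : G -> R -> Prop)
  (M : lmodType R) (MG : G -> M -> Prop) (r : R) (Q : M -> Prop) : Prop :=
  qpSpec RG MG Q /\ ~ qpV RG MG (@smul_sub R M r) Q.

Definition qZ_open (G : Type) (R : comPzRingType) (RG : G -> R -> Prop)
  (M : lmodType R) (MG : G -> M -> Prop) (U : (M -> Prop) -> Prop) : Prop :=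
  exists K, graded_submodule MG K /\
    forall Q, U Q <-> (qpSpec RG MG Q /\ ~ qpV RG MG K Q).

Definition is_base (X I : Type) (open : (X -> Prop) -> Prop)
  (idx : I -> Prop) (B : I -> X -> Prop) : Prop :=
  (forall i, idx i -> open (B i)) /\
  forall U, open U -> forall x, U x ->
    exists i, idx i /\ B i x /\ forall y, B i y -> U y.

(* Main.v *)
Require Import Defs.
From mathcomp Require Import all_boot all_order all_algebra.
From Stdlib Require Import Classical.
Set Implicit Arguments. Unset Strict Implicit. Unset Printing Implicit Defensive.
Import GRing.Theory.
Local Open Scope ring_scope.

Lemma Gr_mono (G : Type) (R : comPzRingType) (RG : G -> R -> Prop) (I J : R -> Prop) x :
  (forall y, I y -> J y) -> Gr RG I x -> Gr RG J x.
Proof.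
move=> IJ [n [gs [f [inj [hf [-> hp]]]]]].
exists n, gs, f; split=> //; split=> //; split=> // i.
by have [k hk] := hp i; exists k; apply: IJ.
Qed.

Lemma hom_pow (G : Type) (mul : G -> G -> G) (R : comPzRingType) (RG : G -> R -> Prop)
  (hR : graded_ring mul RG) a k : homog RG a -> homog RG (a ^+ k.+1).
Proof.
move=> [g hg]; elim: k => [|k [g' IH]]; first by exists g; rewrite expr1.
by exists (mul g g'); rewrite exprS; apply: hR.2.
Qed.

Lemma Gr_homog (G : Type) (R : comPzRingType) (RG : G -> R -> Prop) (I : R -> Prop)
  (hd : dsum_decomp RG) (I0 : I 0) g a :
  RG g a -> Gr RG I a -> exists k, I (a ^+ k.+1).
Proof.
move=> ha [n [gs [f [inj [hf [ea hp]]]]]].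
have [[j0 hj0]|nj] := classic (exists j0, gs j0 = g).
  pose f' := fun j => f j - (if j == j0 then a else 0).
  have := hd.2.2 n gs f' inj.
  have hf' : forall i, RG (gs i) (f' i).
    move=> i; rewrite /f'; case: eqP => [->|_].
      by have := hf j0; rewrite hj0 => h; apply: (hd.1 g).2.
    by rewrite subr0.
  move=> /(_ hf'); rewrite /f' sumrB -big_mkcond /= big_pred1_eq -ea subrr.
  move=> /(_ erefl j0); rewrite eqxx => /eqP; rewrite subr_eq0 => /eqP <-.
  exact: hp.
pose gs' := fun j : 'I_n.+1 => if unlift ord0 j is Some j' then gs j' else g.
pose f' := fun j : 'I_n.+1 => if unlift ord0 j is Some j' then - f j' else a.
have inj' : forall i j, gs' i = gs' j -> i = j.
  move=> i j; rewrite /gs'.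
  case: (unliftP ord0 i) => [i'|] ->; case: (unliftP ord0 j) => [j'|] -> //.
  - by move=> /inj ->.
  - by move=> e; case: nj; exists i'.
  - by move=> e; case: nj; exists j'.
have hf' : forall i, RG (gs' i) (f' i).
  move=> i; rewrite /gs' /f'; case: (unlift ord0 i) => [i'|] //.
  rewrite -sub0r; apply: (hd.1 (gs i')).2; [exact: (hd.1 (gs i')).1 | exact: hf].
have := hd.2.2 n.+1 gs' f' inj' hf'.
rewrite big_ord_recl /f' unlift_none.
under eq_bigr => i _ do rewrite liftK.
rewrite sumrN -ea subrr => /(_ erefl ord0); rewrite unlift_none => ->.
by exists 0%N; rewrite expr1.
Qed.

Lemma smul_graded (G : Type) (mul : G -> G -> G) (e : G) (inv : G -> G)
  (hG : is_group mul e inv)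
  (R : comPzRingType) (RG : G -> R -> Prop)
  (M : lmodType R) (MG : G -> M -> Prop) (hM : graded_module mul RG MG) r :
  homog RG r -> graded_submodule MG (@smul_sub R M r).
Proof.
move=> [g hg]; split.
  split; first by exists 0; rewrite scaler0.
  split; first by move=> x y [m ->] [m' ->]; exists (m + m'); rewrite scalerDr.
  by move=> s x [m ->]; exists (s *: m); rewrite !scalerA mulrC.
move=> x [m ->].
have [n [gs [f [inj [hf ->]]]]] := hM.1.2.1 m.
exists n, (fun i => mul g (gs i)), (fun i => r *: f i); split.
  move=> i j eij; apply: inj.
  have [ha [hb hc]] := hG.
  have H : forall h, h = mul (inv g) (mul g h).
    by move=> h; rewrite ha (hc g).1 (hb h).1.
  by rewrite (H (gs i)) (H (gs j)) eij.
split; last by rewrite scaler_sumr.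
move=> i; split; first exact: hM.2.
by exists (f i).
Qed.

Theorem theorem3p14 (G : Type) (mul : G -> G -> G) (e : G) (inv : G -> G)
  (hG : is_group mul e inv)
  (R : comPzRingType) (RG : G -> R -> Prop) (hR : graded_ring mul RG)
  (M : lmodType R) (MG : G -> M -> Prop) (hM : graded_module mul RG MG) :
  is_base (qZ_open RG MG) (homog RG) (fun r : R => GX RG MG r).
Proof.
split.
  move=> r hr; exists (@smul_sub R M r); split; first exact: (smul_graded hG hM hr).
  by move=> Q.
move=> U [K [hK hU]] Q /hU [hQ nV].
have [r [hrK hrQ]] : exists r, Gr RG (colon K) r /\ ~ Gr RG (colon Q) r.
  apply: NNPP => H; apply: nV; split=> // r hr.
  by apply: NNPP => hn; apply: H; exists r.
move: (hrK) => [n [gs [f [inj [hf [er hp]]]]]].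
have [i hi] : exists i, ~ exists k, colon Q (f i ^+ k.+1).
  apply: NNPP => H; apply: hrQ; exists n, gs, f; do 3!split=> //.
  by move=> i; apply: NNPP => hn; apply: H; exists i.
have Q0 : Q 0 by case: hQ => [[[[]]]].
have nGr : ~ Gr RG (colon Q) (f i).
  move=> hG'; apply: hi; apply: (Gr_homog hR.1 _ (hf i) hG').
  by move=> m; rewrite scale0r.
have [k hk] := hp i.
exists (f i ^+ k.+1); split; first by apply: (hom_pow hR); exists (gs i).
split.
  split=> // -[_ hV]; apply: nGr; apply: hV.
  exists 1%N, (fun _ => gs i), (fun _ => f i); split.
    by move=> a b _; rewrite !ord1.
  split=> //; split; first by rewrite big_ord1.
  by move=> _; exists k => m; exists m.
move=> Q' [hQ' nV']; apply/hU; split=> // -[_ hV]; apply: nV'; split=> // t ht.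
apply: hV; apply: Gr_mono ht => u hu m.
have [m' ->] := hu m; exact: hk.
Qed.
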